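(* Let $U_1,U_2,\dots$ be i.i.d. almost surely positive random variables distributed as $U$ with tail function $Q(x)=\mathbb{P}(U>x)$, and assume $\mathbb{E}[U^2]<\infty$ and that there exist $\beta\in(0,1/2)$ and $x_0>0$ in the interior of the support of $U$ such that $Q^{1/2-\beta}$ is convex on $[x_0,\infty)$. Let $V_1\le\dots\le V_N$ be the order statistics of $(U_1,\dots,U_N)$ and let $Q^{-1}(y)=\inf\{x>0:\ Q(x)\le y\}$ for $y\in(0,1)$. For any function $h$ on $\mathbb{R}_+$ with $\lim_{x\to+\infty}h(x)=+\infty$, set \[a^h_N=\begin{cases}Q^{-1}\big(\tfrac{h(N)}{N}\big)&\text{if }\tfrac{h(N)}N<1,\\ 0&\text{otherwise,}\end{cases}\qquad b^h_N=Q^{-1}\Big(\frac1{Nh(N)}\Big),\qquad A^h_N=\{a^h_N\le V_{N-1}\le V_N\le b^h_N\}.\] Then $\lim_{N\to\infty}\mathbb{P}(A^h_N)=1$. *)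

(* Defs.v *)
From HB Require Import structures.
From mathcomp Require Import all_boot all_order all_algebra.
From mathcomp Require Import all_classical all_reals all_analysis.
Set Implicit Arguments. Unset Strict Implicit. Unset Printing Implicit Defensive.
Import Order.TTheory GRing.Theory Num.Theory.
Import numFieldNormedType.Exports.
Local Open Scope classical_set_scope.
Local Open Scope ring_scope.

Definition mutually_independent d (T : measurableType d) (R : realType)
  (P : probability T R) (X : nat -> {RV P >-> R}) :=
  forall (s : seq nat), uniq s ->
  forall A : nat -> set R, (forall i, measurable (A i)) ->
  P (\bigcap_(i in [set` s]) (X i @^-1` A i)) =
  (\prod_(i <- s) P (X i @^-1` A i))%E.

Definition identically_distributed d (T : measurableType d) (R : realType)
  (P : probability T R) (X : nat -> {RV P >-> R}) :=
  forall i (A : set R), measurable A -> P (X i @^-1` A) = P (X 0 @^-1` A).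

Definition tail d (T : measurableType d) (R : realType)
  (P : probability T R) (U : T -> R) (x : R) : R :=
  fine (P [set w | x < U w]).

Definition tail_inv (R : realType) (Q : R -> R) (y : R) : R :=
  inf [set x : R | 0 < x /\ Q x <= y].

(* support of the law of U: points all of whose neighbourhoods have
   positive probability (smallest closed set of full measure) *)
Definition support_law d (T : measurableType d) (R : realType)
  (P : probability T R) (U : T -> R) : set R :=
  [set x | forall e : R, 0 < e -> (0 < P (U @^-1` ball x e))%E].

Definition convex_on (R : realType) (D : set R) (f : R -> R) :=
  forall x y t, D x -> D y -> 0 <= t <= 1 ->
    f (t * x + (1 - t) * y) <= t * f x + (1 - t) * f y.

(* order statistics of (X 0, ..., X (N-1)) at w, 1-indexed:
   ord_stat X N k w = V_k, the k-th smallest (V_1 <= ... <= V_N) *)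
Definition ord_stat d (T : measurableType d) (R : realType)
  (P : probability T R) (X : nat -> {RV P >-> R}) (N k : nat) (w : T) : R :=
  nth 0 (sort <=%R [seq X i w | i <- iota 0 N]) k.-1.

Definition a_seq (R : realType) (Q : R -> R) (h : R -> R) (N : nat) : R :=
  if h N%:R / N%:R < 1 then tail_inv Q (h N%:R / N%:R) else 0.

Definition b_seq (R : realType) (Q : R -> R) (h : R -> R) (N : nat) : R :=
  tail_inv Q (1 / (N%:R * h N%:R)).

Definition event_A d (T : measurableType d) (R : realType)
  (P : probability T R) (X : nat -> {RV P >-> R}) (h : R -> R) (N : nat) :
  set T :=
  let Q := tail P (X 0) in
  [set w | a_seq Q h N <= ord_stat X N N.-1 w /\
           ord_stat X N N.-1 w <= ord_stat X N N w /\
           ord_stat X N N w <= b_seq Q h N].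

(* Main.v *)
Require Import Defs.
From HB Require Import structures.
From mathcomp Require Import all_boot all_order all_algebra.
From mathcomp Require Import all_classical all_reals all_analysis.
From mathcomp Require Import ring lra zify.
Import Order.TTheory GRing.Theory Num.Theory.
Import numFieldNormedType.Exports.
Local Open Scope classical_set_scope.
Local Open Scope ring_scope.

Lemma sorted_nth_count (R : realType) (s : seq R) (p : pred R) k :
  sorted <=%R s -> (forall x y, x <= y -> p x -> p y) -> (k < size s)%N ->
  p (nth 0 s k) = (size s - k <= count p s)%N.
Proof.
move=> ss mp ks.
have hom := sorted_leq_nth le_trans lexx 0 ss.
apply/idP/idP => [pk|].
  have : all p (drop k s).
    apply/(all_nthP 0) => j; rewrite size_drop => js.
    rewrite nth_drop; apply: (mp _ _ _ pk); apply: hom; rewrite ?inE /= ?leq_addr -?ltn_subRL //.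
  rewrite all_count size_drop => /eqP <-.
  by rewrite -{2}(cat_take_drop k s) count_cat leq_addl.
apply: contraLR => npk.
have : count p (take k.+1 s) = 0%N.
  apply/eqP; rewrite -leqn0 leqNgt -has_count; apply/hasPn => x /(nthP 0) [j].
  rewrite size_take => jlt <-.
  have jk : (j <= k)%N by rewrite -ltnS; move: jlt; case: ifP => H // /leq_trans; apply; rewrite leqNgt H.
  rewrite nth_take ?ltnS //.
  apply: contra npk; apply: mp; apply: hom; rewrite ?inE /= ?jk ?ks //; exact: (leq_ltn_trans jk ks).
move=> c0; rewrite -ltnNge.
have -> : count p s = count p (drop k.+1 s) by rewrite -{1}(cat_take_drop k.+1 s) count_cat c0.
rewrite -(subnSK ks) ltnS -size_drop; exact: count_size.
Qed.

Set Implicit Arguments. Unset Strict Implicit.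

Section ordstat.
Context d (T : measurableType d) (R : realType) (P : probability T R)
  (X : nat -> {RV P >-> R}).

Let l N w := [seq X i w | i <- iota 0 N].

Lemma sorted_l N w : sorted <=%R (sort <=%R (l N w)).
Proof. exact: (sort_sorted le_total). Qed.

Lemma size_sort_l N w : size (sort <=%R (l N w)) = N.
Proof. by rewrite size_sort size_map size_iota. Qed.

Lemma count_sort_l N w (p : pred R) :
  count p (sort <=%R (l N w)) = count (fun i => p (X i w)) (iota 0 N).
Proof. by rewrite (permP (permEl (perm_sort _ _))) count_map. Qed.

Lemma ord_stat_ge N w a : (2 <= N)%N ->
  (a <= ord_stat X N N.-1 w) = (2 <= count (fun i => (a <= X i w)%R) (iota 0 N))%N.
Proof.
move=> N2; rewrite /ord_stat.
rewrite (sorted_nth_count _ _ (fun x => a <= x)) ?sorted_l //.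
- by rewrite size_sort_l count_sort_l; congr (_ <= _)%N; lia.
- by move=> x y xy ax; apply: le_trans xy.
- by rewrite size_sort_l; lia.
Qed.

Lemma ord_stat_le N w b : (2 <= N)%N ->
  (ord_stat X N N w <= b) = (count (fun i => (b < X i w)%R) (iota 0 N) == 0)%N.
Proof.
move=> N2; rewrite /ord_stat.
rewrite leNgt; change [seq X i w | i <- iota 0 N] with (l N w).
rewrite (sorted_nth_count _ _ (fun x => b < x) N.-1 (sorted_l N w)).
- rewrite size_sort_l count_sort_l.
  have -> : (N - N.-1 = 1)%N by lia.
  by rewrite -ltnNge ltnS leqn0.
- by move=> x y xy bx; apply: lt_le_trans xy.
- rewrite size_sort_l; lia.
Qed.

Lemma ord_stat_mono N w : (2 <= N)%N -> ord_stat X N N.-1 w <= ord_stat X N N w.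
Proof.
move=> N2; rewrite /ord_stat.
apply: (sorted_leq_nth le_trans lexx 0 (sorted_l N w)); rewrite ?inE ?size_sort_l /=; lia.
Qed.

End ordstat.

Section tails.
Context d (T : measurableType d) (R : realType) (P : probability T R)
  (Y : {RV P >-> R}).

Local Notation Q := (tail P Y).

Lemma tailE x : (Q x)%:E = ccdf Y x.
Proof.
rewrite /tail fineK ?fin_num_measure //; last first.
  rewrite (_ : [set w | x < Y w] = Y @^-1` `]x, +oo[); last first.
    by apply/seteqP; split => w /=; rewrite in_itv /= andbT.
  exact: measurable_funPTI.
rewrite /ccdf /distribution /pushforward; congr (P _).
by apply/seteqP; split => w /=; rewrite in_itv /= andbT.
Qed.

Lemma tail_noninc x y : x <= y -> Q y <= Q x.
Proof. by move=> xy; rewrite -lee_fin !tailE; exact: ccdf_nonincreasing. Qed.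

Lemma tail_ge0 x : 0 <= Q x.
Proof. by rewrite -lee_fin tailE. Qed.

Lemma tail_to0 y : 0 < y -> exists2 x, 0 < x & Q x <= y.
Proof.
move=> y0.
have hc : Q x @[x --> +oo] --> 0.
  have := cvg_ccdfy0 Y => /fine_cvg; apply: cvg_trans.
  by apply: near_eq_cvg; near=> x => /=; rewrite -tailE.
have := @cvgr_lt _ _ _ _ _ _ hc y y0 => -[M [_ HM]].
have h1 : 0 <= Num.max M 0 by rewrite le_max lexx orbT.
have h2 : M <= Num.max M 0 by rewrite le_max lexx.
exists (Num.max M 0 + 1); first lra.
apply/ltW/HM; lra.
Unshelve. all: by end_near.
Qed.

Lemma tail_inv_le y : 0 < y -> Q (tail_inv Q y) <= y.
Proof.
move=> y0; set b := tail_inv Q y.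
have Sne : [set x | 0 < x /\ Q x <= y] !=set0.
  by have [x x0 Qx] := tail_to0 y0; exists x.
have hb : forall x, b < x -> Q x <= y.
  move=> x bx; have [z [z0 Qz] zx] := inf_lt Sne bx.
  exact: le_trans (tail_noninc (ltW zx)) Qz.
rewrite -lee_fin tailE.
apply: (cvge_to_le (@ccdf_right_continuous _ _ _ _ Y b)).
near=> x; rewrite -tailE lee_fin; apply: hb.
near: x; exact: nbhs_right_gt.
Unshelve. all: by end_near.
Qed.

Lemma tailE' x : P (Y @^-1` `]x, +oo[) = (Q x)%:E.
Proof. by rewrite tailE. Qed.

Lemma tail0 : P [set w | 0 < Y w] = 1%E -> Q 0 = 1.
Proof. by move=> h; rewrite /tail h. Qed.

Lemma tail_inv_ge y : P [set w | 0 < Y w] = 1%E -> 0 < y < 1 ->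
  (y%:E <= P (Y @^-1` `[tail_inv Q y, +oo[))%E.
Proof.
move=> hP /andP[y0 y1]; set a := tail_inv Q y.
set S := [set x | 0 < x /\ Q x <= y].
have lbS : has_lbound S by exists 0 => x [] /ltW.
have hlt : forall x, x < a -> y < Q x.
  move=> x xa; have [x0|x0] := leP x 0.
    by apply: (lt_le_trans y1); rewrite -(tail0 hP); exact: tail_noninc.
  rewrite ltNge; apply/negP => Qx.
  have := ge_inf lbS (conj x0 Qx) => /=; rewrite -/a => ax.
  by move: (lt_le_trans xa ax); rewrite ltxx.
pose F n := Y @^-1` `]a - n.+1%:R^-1, +oo[.
have mF n : measurable (F n) by exact: measurable_funPTI.
have capF : \bigcap_n F n = Y @^-1` `[a, +oo[.
  apply/seteqP; split => w /=; last first.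
    rewrite in_itv /= andbT => aw n _; rewrite /F /= in_itv /= andbT.
    by apply: lt_le_trans aw; rewrite ltrBlDr ltrDl invr_gt0.
  move=> hw; rewrite in_itv /= andbT leNgt; apply/negP => wa.
  set e := a - Y w.
  have e0 : 0 < e by rewrite subr_gt0.
  have := hw (Num.truncn e^-1) I; rewrite /F /= in_itv /= andbT.
  have ht := truncnS_gt e^-1.
  have : (Num.truncn e^-1).+1%:R^-1 < e.
    by move: ht; rewrite -ltf_pV2 ?invrK // posrE ?invr_gt0 ?ltr0n.
  rewrite /e; move: (_.+1%:R^-1) => u; lra.
have := @nonincreasing_cvg_mu _ _ _ P F.
rewrite capF => /(_ _ mF) h.
apply: (cvge_to_ge (h _ _ _)).
- by rewrite (le_lt_trans (probability_le1 _ _)) ?ltry.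
- rewrite -capF; exact: bigcap_measurable.
- move=> m n mn; apply/subsetPset => w; rewrite /F /= !in_itv /= !andbT.
  apply: le_lt_trans; rewrite lerD2l lerN2 lef_pV2 ?posrE ?ltr0n // ler_nat.
  by rewrite ltnS.
- near=> n; rewrite /= /F tailE' lee_fin ltW // hlt //.
  by rewrite ltrBlDr ltrDl invr_gt0.
Unshelve. all: by end_near.
Qed.

End tails.

Lemma prod_const_cond (R : comRingType) (s : seq nat) (p : pred nat) (c : R) :
  \prod_(j <- s | p j) c = c ^+ count p s.
Proof.
elim: s => [|x s IH]; first by rewrite big_nil.
by rewrite big_cons /= IH; case: (p x); rewrite ?exprS.
Qed.

Lemma sum_const_seq (R : realType) (s : seq nat) (c : R) :
  \sum_(j <- s) c = c *+ size s.
Proof.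
elim: s => [|x s IH]; first by rewrite big_nil.
by rewrite big_cons IH mulrS.
Qed.

Lemma two_count (s : seq nat) (p : pred nat) i j : uniq s -> i \in s -> j \in s ->
  i != j -> p i -> p j -> (2 <= count p s)%N.
Proof.
move=> us iS jS ij pi pj; rewrite -size_filter.
apply: (@uniq_leq_size _ [:: i; j]) => /=; first by rewrite inE ij.
by move=> x; rewrite !inE => /orP[]/eqP->; rewrite mem_filter ?pi ?pj.
Qed.

Section indep.
Context d (T : measurableType d) (R : realType) (P : probability T R)
  (X : nat -> {RV P >-> R}).
Hypothesis indep : mutually_independent X.
Hypothesis ident : identically_distributed X.

Lemma prob_cap N (A : nat -> set R) : (forall j, measurable (A j)) ->
  P (\bigcap_(j in [set` iota 0 N]) X j @^-1` A j) =
  (\prod_(j <- iota 0 N) fine (P (X 0 @^-1` A j)))%:E.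
Proof.
move=> mA; rewrite indep ?iota_uniq // -prodEFin; apply: eq_bigr => j _.
by rewrite ident // fineK // fin_num_measure //; exact: measurable_funPTI.
Qed.

Lemma union_bound (s : seq nat) (G : nat -> set T) : (forall i, measurable (G i)) ->
  (P (\big[setU/set0]_(i <- s) G i) <= \sum_(i <- s) P (G i))%E.
Proof.
move=> mG; elim: s => [|x s IH]; first by rewrite !big_nil measure0.
rewrite !big_cons; apply: le_trans (measureU2 _ _ _) _ => //.
  exact: bigsetU_measurable.
exact: leeD.
Qed.

Variables (N : nat) (a b : R).

Definition Z0 := \bigcap_(j in [set` iota 0 N]) X j @^-1` `]-oo, a[.
Definition Gi i := \bigcap_(j in [set` iota 0 N])
  X j @^-1` (if j == i then `[a, +oo[%classic else `]-oo, a[%classic).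
Definition Fb := \bigcap_(j in [set` iota 0 N]) X j @^-1` `]-oo, b].
Definition W := [set w | (count (fun j => (a <= X j w)%R) (iota 0 N) <= 1)%N].
Definition pa := fine (P (X 0 @^-1` `[a, +oo[)).
Definition qa := fine (P (X 0 @^-1` `]-oo, a[)).
Definition qb := fine (P (X 0 @^-1` `]-oo, b])).

Lemma mZ0 : measurable Z0.
Proof.
apply: fin_bigcap_measurable; first exact: finite_seq.
by move=> j _; exact: measurable_funPTI.
Qed.

Lemma mGi i : measurable (Gi i).
Proof.
apply: fin_bigcap_measurable; first exact: finite_seq.
by move=> j _; apply: measurable_funPTI; case: ifP.
Qed.

Lemma mFb : measurable Fb.
Proof.
apply: fin_bigcap_measurable; first exact: finite_seq.
by move=> j _; exact: measurable_funPTI.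
Qed.

Lemma W_eq : W = Z0 `|` \big[setU/set0]_(i <- iota 0 N) Gi i.
Proof.
rewrite -bigcup_seq; apply/seteqP; split => w /=.
- move=> c1.
  have [c0|c0] := eqVneq (count (fun j => (a <= X j w)%R) (iota 0 N)) 0%N.
    left => j /= jS; rewrite in_itv /= ltNge.
    move: c0 => /eqP; rewrite -leqn0 leqNgt -has_count => /hasPn; exact.
  have : has (fun j => (a <= X j w)%R) (iota 0 N) by rewrite has_count lt0n.
  move=> /hasP [i iS ai]; right; exists i => // j /= jS.
  case: eqP => [->|/eqP ji]; first by rewrite /mkset in_itv /= ai.
  rewrite /mkset in_itv /= ltNge; apply/negP => aj.
  have ij : i != j by rewrite eq_sym.
  have := @two_count _ (fun j => (a <= X j w)%R) _ _ (iota_uniq 0 N) iS jS ij ai aj.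
  by rewrite ltnNge c1.
- case => [hz|[i iS hg]].
    rewrite /W /= (eq_in_count (a2 := pred0)) ?count_pred0 // => j jS /=.
    by have := hz j jS; rewrite /= in_itv /= leNgt => ->.
  rewrite /W /= (eq_in_count (a2 := pred1 i)).
    by rewrite count_uniq_mem ?iota_uniq // iS.
  move=> j jS /=; have := hg j jS; rewrite /=.
  by case: eqP => _; rewrite /mkset in_itv /= ?andbT // leNgt => ->.
Qed.

Lemma mW : measurable W.
Proof.
rewrite W_eq; apply: measurableU; first exact: mZ0.
by apply: bigsetU_measurable => i _; exact: mGi.
Qed.

Lemma Fb_eq : [set w | count (fun j => (b < X j w)%R) (iota 0 N) == 0%N] = Fb.
Proof.
apply/seteqP; split => w /=.
- move=> /eqP c0 j /= jS; rewrite in_itv /= leNgt.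
  move: c0 => /eqP; rewrite -leqn0 leqNgt -has_count => /hasPn; exact.
- move=> hf; rewrite -leqn0 leqNgt -has_count; apply/hasPn => j jS.
  by have := hf j jS; rewrite /= in_itv /= leNgt.
Qed.

Lemma pa_qa : qa = 1 - pa.
Proof.
rewrite /qa /pa -setCitvr -preimage_setC probability_setC.
  by rewrite fineB // fin_num_measure //; exact: measurable_funPTI.
exact: measurable_funPTI.
Qed.

Lemma PZ0 : P Z0 = (qa ^+ N)%:E.
Proof.
rewrite /Z0 prob_cap // (prod_const_cond _ xpredT) count_predT size_iota //.
Qed.

Lemma PFb : P Fb = (qb ^+ N)%:E.
Proof.
rewrite /Fb prob_cap // (prod_const_cond _ xpredT) count_predT size_iota //.
Qed.

Lemma PGi i : i \in iota 0 N -> P (Gi i) = (pa * qa ^+ N.-1)%:E.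
Proof.
move=> iS; rewrite /Gi prob_cap; last by move=> j; case: ifP.
rewrite (bigD1_seq i) ?iota_uniq //= eqxx.
rewrite (eq_bigr (fun => qa)); last by move=> j /negbTE ->.
rewrite prod_const_cond.
have hc : count (fun j => j != i) (iota 0 N) = N.-1.
  have := count_predC (pred1 i) (iota 0 N).
  rewrite count_uniq_mem ?iota_uniq // iS size_iota /=.
  by move=> h; rewrite -[in RHS]h add1n.
by rewrite hc.
Qed.

Lemma PW_le : (P W <= (qa ^+ N + (pa * qa ^+ N.-1) *+ N)%:E)%E.
Proof.
rewrite W_eq; apply: le_trans (measureU2 _ _ _) _.
- exact: mZ0.
- by apply: bigsetU_measurable => i _; exact: mGi.
rewrite EFinD; apply: leeD; first by rewrite -PZ0.
apply: le_trans (union_bound _ mGi) _.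
rewrite big_seq (eq_bigr (fun => (pa * qa ^+ N.-1)%:E)); last by move=> i /PGi.
by rewrite -big_seq sumEFin sum_const_seq size_iota.
Qed.

End indep.

Section ineq.
Variable R : realType.

Lemma binom_bound (p : R) k : 0 <= p ->
  1 + k%:R * p + (k%:R * (k%:R - 1) / 2) * p ^+ 2 <= (1 + p) ^+ k.
Proof.
move=> p0; elim: k => [|k IH]; first by rewrite !mul0r !addr0 expr0.
rewrite [(1 + p) ^+ _]exprS.
have hk : 0 <= k%:R * (k%:R - 1) :> R.
  by case: k {IH} => [|k]; rewrite ?mul0r // mulr_ge0 // -natr1 addrK.
have h1 : 0 <= 1 + p by lra.
apply: le_trans _ (ler_wpM2l h1 IH).
rewrite -natr1.
set c := (k%:R : R).
have hp3 : 0 <= c * (c - 1) / 2 * p ^+ 3.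
  by rewrite mulr_ge0 // ?exprn_ge0 // divr_ge0.
rewrite expr2; rewrite !exprS expr0 mulr1 in hp3; nra.
Qed.

Lemma q_bound (p : R) k : 0 <= p <= 1 ->
  (1 - p) ^+ k * (1 + k%:R * p + (k%:R * (k%:R - 1) / 2) * p ^+ 2) <= 1.
Proof.
move=> /andP[p0 p1].
have hq : 0 <= (1 - p) ^+ k by rewrite exprn_ge0 // subr_ge0.
apply: le_trans (ler_wpM2l hq (binom_bound k p0)) _.
rewrite -exprMn; apply: exprn_ile1; nra.
Qed.

Lemma bernoulli (x : R) k : 0 <= x <= 1 -> 1 - k%:R * x <= (1 - x) ^+ k.
Proof.
move=> /andP[x0 x1]; elim: k => [|k IH]; first by rewrite mul0r subr0 expr0.
rewrite exprS -natr1.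
have h : 0 <= 1 - x by lra.
have hk : 0 <= k%:R * (x * x) :> R by rewrite mulr_ge0 // mulr_ge0.
apply: le_trans _ (ler_wpM2l h IH); nra.
Qed.

Lemma tail_sum_bound (p : R) (N : nat) : (4 <= N)%N -> 0 < p <= 1 ->
  ((1 - p) ^+ N + (p * (1 - p) ^+ N.-1) *+ N) * (N%:R * p) <= 6.
Proof.
move=> N4 /andP[p0 p1].
have hN : N = N.-1.+1 by lia.
set k := N.-1 in hN *.
rewrite hN exprS -mulr_natr -natr1.
have k3 : 3 <= k%:R :> R by rewrite (ler_nat R 3); lia.
have Q := q_bound k (p:=p) (ltac:(lra)).
set B := (1 + _ + _) in Q.
set Qk := (1 - p) ^+ k in Q *.
have hQ : 0 <= Qk by rewrite exprn_ge0 // subr_ge0.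
have hB : (k%:R + 1) * p * (1 + k%:R * p) <= 6 * B.
  rewrite /B expr2; nra.
have e : ((1 - p) * Qk + p * Qk * (k%:R + 1)) * ((k%:R + 1) * p)
        = Qk * ((k%:R + 1) * p * (1 + k%:R * p)) by ring.
rewrite e; apply: le_trans (ler_wpM2l hQ hB) _; nra.
Qed.

End ineq.

Section main.
Context d (T : measurableType d) (R : realType) (P : probability T R)
  (X : nat -> {RV P >-> R}) (h : R -> R).
Hypothesis indep : mutually_independent X.
Hypothesis ident : identically_distributed X.
Hypothesis hpos : P [set w | 0 < X 0 w] = 1%E.

Local Notation Q := (tail P (X 0)).

Lemma event_eq N : (4 <= N)%N ->
  event_A X h N = ~` W X N (a_seq Q h N) `&` Fb X N (b_seq Q h N).
Proof.
move=> N4; rewrite /event_A /=.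
apply/seteqP; split => w /=.
- move=> [h1 [_ h2]]; split.
    rewrite /W /=; move: h1; rewrite ord_stat_ge; last lia.
    by move=> h1 h3; move: h1; rewrite ltnNge h3.
  by rewrite -Fb_eq /=; move: h2; rewrite ord_stat_le //; lia.
- move=> [nW hF]; split; last split.
  + rewrite ord_stat_ge; last lia.
    by rewrite ltnNge; apply/negP => h3; apply: nW.
  + by apply: ord_stat_mono; lia.
  + by rewrite ord_stat_le; [rewrite -Fb_eq in hF|lia].
Qed.

Lemma tail_le1 x : Q x <= 1.
Proof.
have := probability_le1 P (measurable_funPTI (X 0) (measurable_itv `]x, +oo[)).
by rewrite tailE' lee_fin.
Qed.

Lemma pa0_ge1 : 1 <= pa X 0.
Proof.
have mp : measurable (X 0 @^-1` `[0%R, +oo[) by exact: measurable_funPTI.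
have : (P [set w | (0 < X 0 w)%R] <= P (X 0 @^-1` `[0%R, +oo[))%E.
  apply: le_measure; rewrite ?inE //.
  + rewrite (_ : [set w | 0 < X 0 w] = X 0 @^-1` `]0, +oo[); last first.
      by apply/seteqP; split => w /=; rewrite in_itv /= andbT.
    exact: measurable_funPTI.
  by move=> w /= w0; rewrite in_itv /= andbT ltW.
by rewrite hpos /pa -[P (X 0 @^-1` _)]fineK ?fin_num_measure ?lee_fin.
Qed.

Lemma bound_N N : (4 <= N)%N -> 1 <= h N%:R ->
  1 - (7 * (h N%:R)^-1 + 6 * (N%:R)^-1) <= fine (P (event_A X h N)).
Proof.
move=> N4 h1.
set hN := h N%:R.
have N0 : 0 < N%:R :> R by rewrite ltr0n; lia.
have hN0 : 0 < hN := lt_le_trans ltr01 h1.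
rewrite event_eq //.
set a := a_seq Q h N; set b := b_seq Q h N.
set E := ~` W X N a `&` Fb X N b.
have mE : measurable E by apply: measurableI; [apply: measurableC; exact: mW | exact: mFb].
have hF : (P (Fb X N b) <= P E + P (W X N a))%E.
  apply: le_trans (measureU2 _ mE (mW X N a)).
  apply: le_measure; rewrite ?inE.
  - exact: mFb.
  - exact: measurableU mE (mW _ _ _).
  move=> w Fw; have [Ww|nWw] := pselect (W X N a w); [by right|by left].
have fE : P E = (fine (P E))%:E by rewrite fineK // fin_num_measure.
have fW : P (W X N a) = (fine (P (W X N a)))%:E.
  rewrite fineK // fin_num_measure //; exact: mW.
rewrite (PFb indep ident) fE fW -EFinD lee_fin in hF.
have y0 : 0 < 1 / (N%:R * hN) by rewrite div1r invr_gt0 mulr_gt0.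
have Qb : Q b <= (N%:R * hN)^-1 by rewrite -div1r; exact: tail_inv_le.
have qbE : qb X b = 1 - Q b.
  rewrite /qb -setCitvr -preimage_setC probability_setC; last exact: measurable_funPTI.
  by rewrite tailE'.
have Qb0 : 0 <= Q b := tail_ge0 _ _.
have Qb1 : Q b <= 1 := tail_le1 b.
have bern := bernoulli N (x := Q b) (ltac:(lra)).
have NQb : N%:R * Q b <= hN^-1.
  apply: le_trans (ler_wpM2l (ltW N0) Qb) _.
  by rewrite invfM mulrA mulfV ?mul1r // gt_eqF.
have PWb := PW_le indep ident N a.
rewrite fW lee_fin in PWb.
have pa1 : pa X a <= 1.
  have := probability_le1 P (measurable_funPTI (X 0) (measurable_itv `[a, +oo[)).
  by rewrite /pa -[P _]fineK ?fin_num_measure // ?lee_fin //; exact: measurable_funPTI.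
have hpa : 0 < pa X a /\ (N%:R * pa X a)^-1 <= hN^-1 + (N%:R)^-1.
  have Nin : 0 <= (N%:R : R)^-1 by rewrite invr_ge0 ltW.
  have hin : 0 <= hN^-1 by rewrite invr_ge0 ltW.
  rewrite /a /a_seq -/hN; case: ifP => hlt.
  - have yy : 0 < hN / N%:R < 1 by rewrite hlt divr_gt0.
    have := tail_inv_ge hpos yy.
    rewrite -[P _]fineK; last by rewrite fin_num_measure //; exact: measurable_funPTI.
    rewrite lee_fin -/(pa X _).
    move=> hy.
    have hy' : hN <= N%:R * pa X (tail_inv Q (hN / N%:R)).
      by rewrite -ler_pdivrMl // mulrC.
    split; first by apply: lt_le_trans hy; rewrite divr_gt0.
    apply: le_trans (_ : hN^-1 <= _); last lra.
    by rewrite lef_pV2 ?posrE // (lt_le_trans hN0).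
  - have p1 := pa0_ge1.
    split; first lra.
    apply: le_trans (_ : (N%:R)^-1 <= _); last lra.
    by rewrite lef_pV2 ?posrE ?mulr_gt0 // ?(lt_le_trans _ p1) // ler_peMr // ltW.
have [pa0 hpa2] := hpa.
have tsb := tail_sum_bound N4 (p := pa X a) (ltac:(lra)).
rewrite -pa_qa in tsb.
have hW : fine (P (W X N a)) <= 6 * (hN^-1 + (N%:R)^-1).
  apply: le_trans PWb _.
  have Np0 : 0 < N%:R * pa X a by rewrite mulr_gt0.
  rewrite -ler_pdivlMr // in tsb.
  apply: le_trans tsb _.
  by rewrite ler_wpM2l.
rewrite qbE in hF.
lra.
Qed.

End main.

Unset Implicit Arguments.

Theorem lemma2 (d : measure_display) (T : measurableType d) (R : realType)
  (P : probability T R) (X : nat -> {RV P >-> R})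
  (beta x0 : R) (h : R -> R) :
  mutually_independent X ->
  identically_distributed X ->
  P [set w | 0 < X 0 w] = 1%E ->
  ('E_P[fun w => (X 0%N w ^+ 2)%R] < +oo)%E ->
  0 < beta < 1 / 2 ->
  0 < x0 ->
  interior (support_law P (X 0)) x0 ->
  convex_on [set x | x0 <= x] (fun x => powR (tail P (X 0) x) (1 / 2 - beta)) ->
  h x @[x --> +oo] --> +oo ->
  (fun N => P (event_A X h N)) @ \oo --> 1%E.
Proof.
move=> indep ident hpos _ _ _ _ _ hh.
have hN : h N%:R @[N --> \oo] --> +oo := cvg_comp _ _ cvgr_idn hh.
have e1 : \forall N \near \oo, 1 <= h N%:R by exact: (cvgryPge _).1 hN 1.
have e4 : \forall N \near \oo, (4 <= N)%N by exists 4%N.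
have mA : \forall N \near \oo, measurable (event_A X h N).
  near=> N; rewrite (event_eq X h) //; last by near: N.
  by apply: measurableI; [apply: measurableC; exact: mW | exact: mFb].
apply: cvg_EFin.
  by near=> N; apply: fin_num_measure; near: N.
have c1 : (fun N : nat => (h N%:R)^-1) @ \oo --> 0.
  apply/gtr0_cvgV0 => //; near=> N; apply: lt_le_trans ltr01 _; near: N; exact: e1.
have c2 : (fun N : nat => (N%:R : R)^-1) @ \oo --> 0.
  apply/gtr0_cvgV0; last exact: cvgr_idn.
  by near=> N; rewrite ltr0n; near: N; exists 1%N.
have c3 := cvgB (cvg_cst (1 : R)) (cvgD (cvgM (cvg_cst (7 : R)) c1) (cvgM (cvg_cst (6 : R)) c2)).
rewrite !mulr0 addr0 subr0 in c3.
apply: (@squeeze_cvgr _ _ _ _ (fun N => 1 - (7 * (h N%:R)^-1 + 6 * (N%:R)^-1)) (fun=> 1)); last 2 first.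
  exact: c3.
  exact: cvg_cst.
near=> N; apply/andP; split.
- rewrite /=; apply: (bound_N indep ident hpos); near: N; [exact: e4 | exact: e1].
- have mN : measurable (event_A X h N) by near: N; exact: mA.
  rewrite /= -lee_fin fineK ?fin_num_measure //; exact: probability_le1.
Unshelve. all: by end_near.
Qed.
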